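(* Let $L$ be a Lelek fan with top $v$ and let $W$ be a wedge in $L$. Then there is a retraction from $L$ onto $W$.
   Context: A continuum is a nonempty compact connected metric space. A dendroid is an arcwise connected, hereditarily unicoherent continuum. A point $x$ of a dendroid $X$ is a ramification point if $x$ is the top (the branch point) of some simple triod in $X$. A fan is a dendroid with at most one ramification point; this point, if it exists, is called the top of the fan. For a fan $X$, a point $x$ is an end point of $X$ if $x$ is an end point of every arc in $X$ containing $x$; $E(X)$ denotes the set of end points of $X$. A fan $X$ with top $v$ is smooth if for every $x\in X$ and every sequence $x_n\to x$ in $X$, the arcs from $v$ to $x_n$ converge (in the Hausdorff metric) to the arc from $v$ to $x$. A Lelek fan is a smooth fan $X$ with $\mathrm{Cl}(E(X))=X$. If $L$ is a Lelek fan with top $v$, a subcontinuum $W\subseteq L$ is a wedge in $L$ if both $W$ and $(L\setminus W)\cup\{v\}$ are Lelek fans. A retraction from a space $X$ onto a subspace $Y$ is a continuous map $r:X\to Y$ with $r(y)=y$ for all $y\in Y$. *)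

(* Defs.v *)
From HB Require Import structures.
From mathcomp Require Import all_boot all_order all_algebra.
From mathcomp Require Import all_classical all_reals all_analysis.
Set Implicit Arguments. Unset Strict Implicit. Unset Printing Implicit Defensive.
Import Order.TTheory GRing.Theory Num.Theory.
Import numFieldNormedType.Exports.
Local Open Scope classical_set_scope.
Local Open Scope ring_scope.

Section Continua.
Variables (R : realType) (T : pseudoMetricType R).

Definition unitI : set R := `[0, 1]%classic.

(* f : [0,1] -> B is a homeomorphism with inverse g *)
Definition arc_param (B : set T) (f : R -> T) (g : T -> R) : Prop :=
  [/\ {within unitI, continuous f}, {within B, continuous g},
      (forall t, unitI t -> B (f t)), (forall x, B x -> unitI (g x)) &
      ((forall t, unitI t -> g (f t) = t) /\ (forall x, B x -> f (g x) = x))].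

Definition is_arc (B : set T) : Prop := exists f g, arc_param B f g.

Definition arc_from_to (B : set T) (x y : T) : Prop :=
  exists f g, arc_param B f g /\ f 0 = x /\ f 1 = y.

Definition arc_endpoint (B : set T) (x : T) : Prop :=
  exists y, arc_from_to B x y.

Definition continuum (A : set T) : Prop :=
  [/\ A !=set0, compact A & connected A].

Definition arcwise_connected (A : set T) : Prop :=
  forall x y, A x -> A y -> x <> y -> exists B, B `<=` A /\ arc_from_to B x y.

Definition hereditarily_unicoherent (A : set T) : Prop :=
  forall P Q, P `<=` A -> Q `<=` A -> continuum P -> continuum Q ->
    connected (P `&` Q).

Definition dendroid (A : set T) : Prop :=
  [/\ continuum A, arcwise_connected A & hereditarily_unicoherent A].

Definition simple_triod (S : set T) (x : T) : Prop :=
  exists B1 B2 B3 y1 y2 y3,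
    [/\ arc_from_to B1 x y1, arc_from_to B2 x y2, arc_from_to B3 x y3,
        S = B1 `|` B2 `|` B3 &
        [/\ B1 `&` B2 = [set x], B1 `&` B3 = [set x] & B2 `&` B3 = [set x]]].

Definition ramification_point (A : set T) (x : T) : Prop :=
  exists S, S `<=` A /\ simple_triod S x.

Definition fan (A : set T) : Prop :=
  dendroid A /\ (forall x y, ramification_point A x -> ramification_point A y -> x = y).

Definition fan_with_top (A : set T) (v : T) : Prop :=
  fan A /\ ramification_point A v.

Definition end_point (A : set T) (x : T) : Prop :=
  A x /\ forall B, B `<=` A -> is_arc B -> B x -> arc_endpoint B x.

Definition end_points (A : set T) : set T := [set x | end_point A x].

Definition varc (A : set T) (v x : T) (I : set T) : Prop :=
  I `<=` A /\ (if pselect (x = v) then I = [set v] else arc_from_to I v x).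

Definition hausdorff_cvg (K : nat -> set T) (K0 : set T) : Prop :=
  forall e : R, 0 < e -> exists N : nat, forall n, (N <= n)%N ->
    (forall y, K n y -> exists z, K0 z /\ ball z e y) /\
    (forall z, K0 z -> exists y, K n y /\ ball y e z).

Definition smooth_fan (A : set T) (v : T) : Prop :=
  fan_with_top A v /\
  forall x (u : nat -> T), A x -> (forall n, A (u n)) -> u @ \oo --> x ->
    forall I (In : nat -> set T), varc A v x I -> (forall n, varc A v (u n) (In n)) ->
      hausdorff_cvg In I.

Definition lelek_fan (A : set T) (v : T) : Prop :=
  smooth_fan A v /\ closure (end_points A) = A.

Definition wedge (L : set T) (v : T) (W : set T) : Prop :=
  [/\ W `<=` L, continuum W, (exists w, lelek_fan W w) &
      (exists w, lelek_fan ((L `\` W) `|` [set v]) w)].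

Definition retraction (X Y : set T) (r : T -> T) : Prop :=
  [/\ {within X, continuous r}, (forall x, X x -> Y (r x)) & (forall y, Y y -> r y = y)].

End Continua.

(* Main.v *)
Require Import Defs.
From HB Require Import structures.
From mathcomp Require Import all_boot all_order all_algebra.
From mathcomp Require Import all_classical all_reals all_analysis.
Import numFieldNormedType.Exports.
Local Open Scope classical_set_scope.

Theorem mainTheorem7 (R : realType) (T : pseudoMetricType R)
    (hT : hausdorff_space T) (L W : set T) (v : T) :
  lelek_fan L v -> wedge L v W -> exists r : T -> T, retraction L W r.
Proof.
move=> [[[[[[_ _ Lconn] _ _] _] _] _] _] [WL [W0 Wc _] _ [w [[[[[[_ Vc _] _ _] _] _] _] _]]].
set V := (L `\` W) `|` [set v] in Vc.
have cW : closed W by apply: compact_closed.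
have cV : closed V by apply: compact_closed.
have [vW|nvW] := pselect (W v); last first.
  have WeL : W = L.
    apply: Lconn => //.
      exists (~` V); first exact: closed_openC.
      apply/seteqP; split => x.
        move=> Wx; split; first exact: WL.
        by move=> [[_ /(_ Wx)]//|xv]; apply: nvW; rewrite -xv.
      by move=> [Lx nVx]; apply: contrapT => nWx; apply: nVx; left.
    by exists W => //; apply/seteqP; split => x; [move=> Wx; split => //; exact: WL|case].
  exists id; split => //; last by rewrite WeL.
  have idc : continuous (@id T) by move=> x; exact: cvg_id.
  exact: continuous_subspaceT idc.
exists (fun x => if pselect (W x) then x else v); split.
- apply: (continuous_subspaceW (B := W `|` V)).
    by move=> x Lx; have [Wx|nWx] := pselect (W x); [left|right; left].
  apply: withinU_continuous => //.
    have idc : continuous (@id T) by move=> x; exact: cvg_id.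
    have Hc : {within W, continuous id} by exact: continuous_subspaceT idc.
    refine (@subspace_eq_continuous _ W _ _ _ _ Hc).
    by move=> x; rewrite inE => Wx /=; rewrite /from_subspace; case: pselect.
  have Hc : {within V, continuous (fun _ : T => v)}.
    by apply: continuous_subspaceT => x; exact: cvg_cst.
  refine (@subspace_eq_continuous _ V _ _ _ _ Hc).
  move=> x; rewrite inE => Vx /=; rewrite /from_subspace; case: pselect => // Wx.
  by case: Vx => [[_ /(_ Wx)]//|xv]; exact: (esym xv).
- by move=> x Lx; case: pselect.
- by move=> y Wy; case: pselect.
Qed.
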